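(* Let $\alpha\in(0,1)$ be irrational and let $B_1,B_2,\dots$ be the Minkowski chain of $\alpha$ (case $n=1$). Then $|\det B_k|=1$ for all $k\ge1$.
   Context: Minkowski chain: Let $n\ge1$, $\ell=n+1$, $(\alpha_1,\dots,\alpha_n)\in\mathbb{R}^n$ with $\alpha_1,\dots,\alpha_n,1$ linearly independent over $\mathbb{Q}$. For $r=(r_1,\dots,r_\ell)\in\mathbb{Z}^\ell$ put $\xi(r)=r_1\alpha_1+\cdots+r_n\alpha_n+r_\ell$. For a real matrix or vector, $\|\cdot\|_\infty$ is the maximum absolute value of its entries. For $m\in\mathbb{Z}^+$, $A_m$ is the nonsingular integral $\ell\times\ell$ matrix with rows $w_1,\dots,w_\ell$ chosen successively: $w_i$ is the vector $w\in\mathbb{Z}^\ell$ with $\|w\|_\infty\le m$, linearly independent of $w_1,\dots,w_{i-1}$, minimizing $|\xi(w)|$, normalized so that its first nonzero entry is positive (unique by the linear independence hypothesis). The Minkowski chain $B_1,B_2,\dots$ is the sequence of distinct matrices among $A_1,A_2,A_3,\dots$ in order of appearance ($B_1=A_1$). Here $n=1$ and $\alpha_1=\alpha$. *)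

(* Defs.v *)
From Stdlib Require Import Reals ZArith.
Open Scope R_scope.

(* Case n = 1, l = 2.  A vector r = (r1, r2) in Z^2; xi(r) = r1*alpha + r2. *)
Definition vec := (Z * Z)%type.
(* A 2x2 integral matrix, given by its rows (w1, w2). *)
Definition mat := (vec * vec)%type.

Definition xi (alpha : R) (r : vec) : R := IZR (fst r) * alpha + IZR (snd r).

Definition supnorm (r : vec) : Z := Z.max (Z.abs (fst r)) (Z.abs (snd r)).

Definition normalized (r : vec) : Prop :=
  (0 < fst r)%Z \/ (fst r = 0%Z /\ (0 < snd r)%Z).

Definition lin_indep1 (w : vec) : Prop := w <> (0%Z, 0%Z).
Definition lin_indep2 (w1 w2 : vec) : Prop :=
  forall a b : Z,
    (a * fst w1 + b * fst w2 = 0)%Z -> (a * snd w1 + b * snd w2 = 0)%Z ->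
    a = 0%Z /\ b = 0%Z.

Definition IsRow1 (alpha : R) (m : nat) (w : vec) : Prop :=
  (supnorm w <= Z.of_nat m)%Z /\ lin_indep1 w /\ normalized w /\
  forall v : vec, (supnorm v <= Z.of_nat m)%Z -> lin_indep1 v ->
    Rabs (xi alpha w) <= Rabs (xi alpha v).

Definition IsRow2 (alpha : R) (m : nat) (w1 w2 : vec) : Prop :=
  (supnorm w2 <= Z.of_nat m)%Z /\ lin_indep2 w1 w2 /\ normalized w2 /\
  forall v : vec, (supnorm v <= Z.of_nat m)%Z -> lin_indep2 w1 v ->
    Rabs (xi alpha w2) <= Rabs (xi alpha v).

Definition IsA (alpha : R) (m : nat) (A : mat) : Prop :=
  IsRow1 alpha m (fst A) /\ IsRow2 alpha m (fst A) (snd A).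

Definition det2 (A : mat) : Z :=
  (fst (fst A) * snd (snd A) - snd (fst A) * fst (snd A))%Z.

Definition is_new (A : nat -> mat) (m : nat) : Prop :=
  (1 <= m)%nat /\ forall j : nat, (1 <= j < m)%nat -> A j <> A m.

(* B_1, B_2, ... is the Minkowski chain of alpha: the distinct matrices among
   A_1, A_2, ... in order of appearance.  t enumerates (increasingly) the
   positions of first appearance. *)
Definition MinkowskiChain (alpha : R) (B : nat -> mat) : Prop :=
  exists (A : nat -> mat) (t : nat -> nat),
    (forall m : nat, (1 <= m)%nat -> IsA alpha m (A m)) /\
    (forall k : nat, (1 <= k)%nat -> is_new A (t k)) /\
    (forall k : nat, (1 <= k)%nat -> (t k < t (S k))%nat) /\
    (forall m : nat, is_new A m -> exists k : nat, (1 <= k)%nat /\ t k = m) /\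
    (forall k : nat, (1 <= k)%nat -> B k = A (t k)).

Definition irrational (x : R) : Prop :=
  ~ exists p q : Z, q <> 0%Z /\ x = IZR p / IZR q.

(* Main.v *)
Require Import Defs.
From Stdlib Require Import Reals ZArith.
From Stdlib Require Import Znumtheory Lia Lra Psatz.
Open Scope R_scope.

Lemma rabs_eq_cases (x y : R) : Rabs x = Rabs y -> x = y \/ x = - y.
Proof.
  unfold Rabs; destruct (Rcase_abs x), (Rcase_abs y); intros; lra.
Qed.

Lemma irr_zero (alpha : R) (Hirr : irrational alpha) (a c : Z) :
  IZR a * alpha + IZR c = 0 -> a = 0%Z /\ c = 0%Z.
Proof.
  intros H.
  destruct (Z.eq_dec a 0) as [Ha|Ha].
  - subst a. split; auto. apply eq_IZR. simpl in H. lra.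
  - exfalso. apply Hirr. exists (- c)%Z, a. split; auto.
    rewrite opp_IZR. field_simplify_eq. lra.
    apply not_0_IZR; auto.
Qed.

Lemma round_exists (a D : Z) : D <> 0%Z ->
  exists k, (2 * Z.abs (a + k * D) <= Z.abs D)%Z.
Proof.
  intros HD.
  set (Dp := Z.abs D).
  assert (HDp : (0 < Dp)%Z) by (unfold Dp; lia).
  pose proof (Z.div_mod a Dp ltac:(lia)) as Hdm.
  pose proof (Z.mod_pos_bound a Dp HDp) as Hb.
  set (qd := (a / Dp)%Z) in *. set (r := (a mod Dp)%Z) in *.
  destruct (Z_lt_le_dec 0 D) as [Hpos|Hneg].
  - assert (HDD : Dp = D) by (unfold Dp; lia).
    assert (Hm : (qd * D = Dp * qd)%Z) by (rewrite HDD; ring).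
    destruct (Z_le_gt_dec (2*r) Dp).
    + exists (- qd)%Z. replace (a + - qd * D)%Z with r by lia. lia.
    + exists (- qd - 1)%Z. replace (a + (- qd - 1) * D)%Z with (r - Dp)%Z by lia. lia.
  - assert (HDD : (Dp = - D)%Z) by (unfold Dp; lia).
    assert (Hm : (qd * D = - (Dp * qd))%Z) by (rewrite HDD; ring).
    destruct (Z_le_gt_dec (2*r) Dp).
    + exists qd. replace (a + qd * D)%Z with r by lia. lia.
    + exists (qd + 1)%Z. replace (a + (qd + 1) * D)%Z with (r - Dp)%Z by lia. lia.
Qed.

Lemma xi_nz (alpha : R) (Hirr : irrational alpha) (w : vec) :
  lin_indep1 w -> xi alpha w <> 0.
Proof.
  destruct w as [q p]. unfold lin_indep1, xi; simpl. intros Hw H.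
  apply irr_zero in H; auto. apply Hw. destruct H; subst; auto.
Qed.

Lemma primitive (alpha : R) (Hirr : irrational alpha) (m : nat) (w : vec) :
  IsRow1 alpha m w -> exists x y, (fst w * y - snd w * x = 1)%Z.
Proof.
  destruct w as [q p]. intros [Hs [Hi [Hn Hmin]]]. simpl.
  set (g := Z.gcd q p).
  assert (Hg0 : (0 < g)%Z).
  { pose proof (Z.gcd_nonneg q p). assert (g <> 0%Z).
    { unfold g; rewrite Z.gcd_eq_0. intros [-> ->]. apply Hi; auto. } lia. }
  destruct (Zis_gcd_bezout _ _ _ (Zgcd_is_gcd q p)) as [u v Huv].
  destruct (Z.eq_dec g 1) as [Hg1|Hg1].
  - exists (- v)%Z, u. fold g in Huv. lia.
  - exfalso.
    destruct (Z.gcd_divide_l q p : (g | q)%Z) as [q' Hq'].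
    destruct (Z.gcd_divide_r q p : (g | p)%Z) as [p' Hp'].
    assert (Hsn : (supnorm (q', p') <= Z.of_nat m)%Z).
    { unfold supnorm in *; simpl in *.
      rewrite Hq', Hp', !Z.abs_mul in Hs. rewrite (Z.abs_eq g) in Hs by lia. nia. }
    assert (Hin : lin_indep1 (q', p')).
    { intro E. injection E as E1 E2. apply Hi. rewrite Hq', Hp', E1, E2. reflexivity. }
    specialize (Hmin _ Hsn Hin).
    pose proof (xi_nz alpha Hirr _ Hi) as Hnz.
    assert (Hx : xi alpha (q, p) = IZR g * xi alpha (q', p')).
    { unfold xi; simpl. rewrite Hq', Hp', !mult_IZR. ring. }
    rewrite Hx, Rabs_mult in Hmin. rewrite Hx in Hnz.
    assert (IZR g >= 2) by (apply Rle_ge, IZR_le; lia).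
    assert (Rabs (IZR g) = IZR g) by (apply Rabs_right; lra).
    assert (Rabs (xi alpha (q', p')) > 0).
    { apply Rabs_pos_lt. intro E; apply Hnz; rewrite E; ring. }
    nra.
Qed.

Lemma key (alpha : R) (Hirr : irrational alpha) (m : nat) (A : mat) :
  IsA alpha m A -> Z.abs (det2 A) = 1%Z.
Proof.
  intros [HR1 HR2].
  destruct (primitive alpha Hirr m _ HR1) as [x0 [y0 Hxy]].
  destruct A as [[q1 p1] [q2 p2]]. simpl in *.
  destruct HR1 as [Hs1 [Hi1 [Hn1 Hmin1]]].
  destruct HR2 as [Hs2 [Hi2 [Hn2 Hmin2]]].
  unfold det2; simpl.
  set (D := (q1 * p2 - p1 * q2)%Z).
  set (M := Z.of_nat m) in *.
  assert (HD0 : D <> 0%Z).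
  { intro E. unfold D in E. 
    assert (E12 : q2 = 0%Z /\ (- q1 = 0)%Z) by (apply Hi2; simpl; lia).
    assert (E34 : p2 = 0%Z /\ (- p1 = 0)%Z) by (apply Hi2; simpl; lia).
    apply Hi1. f_equal; lia. }
  destruct (Z.eq_dec (Z.abs D) 1) as [|Hne]; auto. exfalso.
  assert (HD2 : (2 <= Z.abs D)%Z) by lia.
  set (a := (x0 * p2 - y0 * q2)%Z).
  destruct (round_exists a D HD0) as [k Hk].
  set (b := (a + k * D)%Z) in *.
  set (v1 := (x0 + k * q1)%Z). set (v2 := (y0 + k * p1)%Z).
  assert (E1 : (D * v1 = b * q1 + q2)%Z).
  { assert (T : (D * v1 - (b * q1 + q2) = q2 * (q1 * y0 - p1 * x0 - 1))%Z)
      by (unfold b, a, v1, D; ring). rewrite Hxy in T. lia. }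
  assert (E2 : (D * v2 = b * p1 + p2)%Z).
  { assert (T : (D * v2 - (b * p1 + p2) = p2 * (q1 * y0 - p1 * x0 - 1))%Z)
      by (unfold b, a, v2, D; ring). rewrite Hxy in T. lia. }
  unfold supnorm in Hs1, Hs2; simpl in Hs1, Hs2.
  assert (Hq1 : (Z.abs q1 <= M)%Z) by lia.
  assert (Hp1 : (Z.abs p1 <= M)%Z) by lia.
  assert (Hq2 : (Z.abs q2 <= M)%Z) by lia.
  assert (Hp2 : (Z.abs p2 <= M)%Z) by lia.
  assert (Hbnd : forall x y z : Z, (Z.abs y <= M)%Z -> (Z.abs z <= M)%Z ->
             (D * x = b * y + z)%Z -> (Z.abs x <= M)%Z).
  { intros x y z Hy Hz Ex.
    assert (Z.abs D * Z.abs x <= Z.abs b * M + M)%Z.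
    { rewrite <- Z.abs_mul, Ex.
      pose proof (Z.abs_triangle (b*y) z) as T. rewrite Z.abs_mul in T.
      pose proof (Z.abs_nonneg b).
      assert (Z.abs b * Z.abs y <= Z.abs b * M)%Z by (apply Z.mul_le_mono_nonneg_l; lia).
      lia. }
    pose proof (Z.abs_nonneg b). pose proof (Z.abs_nonneg x).
    assert (HM : (0 <= M)%Z) by (unfold M; lia).
    destruct (Z_le_gt_dec (Z.abs x) M) as [|Hx]; auto. exfalso.
    assert (Z.abs D * (M + 1) <= Z.abs D * Z.abs x)%Z by (apply Z.mul_le_mono_nonneg_l; lia).
    assert (2 * Z.abs b * M <= Z.abs D * M)%Z by (apply Z.mul_le_mono_nonneg_r; lia).
    assert (2 * M <= Z.abs D * M)%Z by (apply Z.mul_le_mono_nonneg_r; lia).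
    lia. }
  assert (Hsv : (supnorm (v1, v2) <= M)%Z).
  { unfold supnorm; simpl. apply Z.max_lub; eauto. }
  assert (Hiv : lin_indep2 (q1, p1) (v1, v2)).
  { unfold lin_indep2; simpl. intros c d Ec Ed.
    assert (Hdet : (q1 * v2 - p1 * v1 = 1)%Z).
    { assert (T : (q1 * v2 - p1 * v1 = q1 * y0 - p1 * x0)%Z) by (unfold v1, v2; ring). lia. }
    assert (T1 : ((c*q1+d*v1)*v2 - (c*p1+d*v2)*v1 = c*(q1*v2-p1*v1))%Z) by ring.
    assert (T2 : ((c*p1+d*v2)*q1 - (c*q1+d*v1)*p1 = d*(q1*v2-p1*v1))%Z) by ring.
    rewrite Ec, Ed, Hdet in T1. rewrite Ec, Ed, Hdet in T2. lia. }
  specialize (Hmin2 _ Hsv Hiv).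
  set (x1 := xi alpha (q1, p1)) in *. set (x2 := xi alpha (q2, p2)) in *.
  assert (Hw2 : lin_indep1 (q2, p2)).
  { intro E. inversion E. subst. destruct (Hi2 0%Z 1%Z); simpl; lia. }
  assert (Hs2' : (supnorm (q2, p2) <= M)%Z) by (unfold supnorm; simpl; lia).
  specialize (Hmin1 _ Hs2' Hw2).
  assert (Hlt : Rabs x1 < Rabs x2).
  { destruct (Rle_lt_or_eq_dec _ _ Hmin1) as [|Heq]; auto. exfalso.
    destruct (rabs_eq_cases _ _ Heq) as [Ex|Ex]; unfold x1, x2, xi in Ex; simpl in Ex.
    - assert (IZR (q1 - q2) * alpha + IZR (p1 - p2) = 0) by (rewrite !minus_IZR; lra).
      apply irr_zero in H; auto. destruct (Hi2 1%Z (-1)%Z); simpl; lia.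
    - assert (IZR (q1 + q2) * alpha + IZR (p1 + p2) = 0) by (rewrite !plus_IZR; lra).
      apply irr_zero in H; auto. destruct (Hi2 1%Z 1%Z); simpl; lia. }
  assert (Hxv : xi alpha (v1, v2) * IZR D = IZR b * x1 + x2).
  { unfold x1, x2, xi; simpl.
    replace ((IZR v1 * alpha + IZR v2) * IZR D) with (IZR (D * v1) * alpha + IZR (D * v2)) by (rewrite !mult_IZR; ring).
    rewrite E1, E2, !plus_IZR, !mult_IZR. ring. }
  assert (Habs : Rabs (xi alpha (v1, v2)) * IZR (Z.abs D) <= IZR (Z.abs b) * Rabs x1 + Rabs x2).
  { rewrite !abs_IZR, <- Rabs_mult, Hxv, <- Rabs_mult. apply Rabs_triang. }
  assert (HbD : 2 * IZR (Z.abs b) <= IZR (Z.abs D)).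
  { replace 2 with (IZR 2) by reflexivity. rewrite <- mult_IZR. apply IZR_le. lia. }
  assert (HD2r : 2 <= IZR (Z.abs D)) by (apply IZR_le; lia).
  assert (Hb0 : 0 <= IZR (Z.abs b)) by (apply IZR_le; lia).
  pose proof (Rabs_pos x1).
  set (y := Rabs (xi alpha (v1, v2))) in *.
  set (Bb := IZR (Z.abs b)) in *. set (Dd := IZR (Z.abs D)) in *.
  set (a1 := Rabs x1) in *. set (a2 := Rabs x2) in *.
  assert (Dd * a2 <= Dd * y) by (apply Rmult_le_compat_l; lra).
  assert (2 * Bb * a2 <= Dd * a2) by (apply Rmult_le_compat_r; lra).
  assert (2 * a2 <= Dd * a2) by (apply Rmult_le_compat_r; lra).
  destruct (Rle_lt_or_eq_dec 0 Bb Hb0) as [Hbp|Hbz].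
  - assert (Bb * a1 < Bb * a2) by (apply Rmult_lt_compat_l; lra). lra.
  - rewrite <- Hbz in *. lra.
Qed.

Theorem mainTheorem2 (alpha : R) (Hirr : irrational alpha)
  (H0 : 0 < alpha) (H1 : alpha < 1) (B : nat -> mat)
  (HB : MinkowskiChain alpha B) :
  forall k : nat, (1 <= k)%nat -> Z.abs (det2 (B k)) = 1%Z.
Proof.
  destruct HB as [A [t [HA [Hnew [_ [_ HBt]]]]]].
  intros k Hk. rewrite HBt by auto.
  destruct (Hnew k Hk) as [Ht _].
  apply (key alpha Hirr (t k)). apply HA; auto.
Qed.
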